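(* For any stochastic CA $\mathcal{A}=(Q,R,V,V',f)$ there is a plain probabilistic cellular automaton (PCA) $\mathcal{B}$ such that $\mathcal{A}\sqsubseteq^S_i\mathcal{B}$.
   Context: A stochastic CA is $(Q,R,V,V',f)$ with $Q$ finite states, $R$ finite random symbols, $V=\{v_1,\dots,v_r\}$, $V'=\{v'_1,\dots,v'_{r'}\}$ finite subsets of $\mathbb{Z}$, $f:Q^r\times R^{r'}\to Q$; explicit global function $F(c,s)_z=f((c_{z+v_1},\dots,c_{z+v_r}),(s_{z+v'_1},\dots,s_{z+v'_{r'}}))$ for $c\in Q^{\mathbb{Z}},s\in R^{\mathbb{Z}}$. It is a PCA if $V'=\{0\}$. $\nu_R$ is the uniform Bernoulli measure on $R^{\mathbb{Z}}$; the stochastic global function $S_F$ maps $c$ to the law of $F(c,s)$, $s\sim\nu_R$ (i.e. $S_F(c)([u]_z)=\nu_R\{s:F(c,s)\in[u]_z\}$ on cylinders $[u]_z$). Iterates: $F^{t+1}(c,s^1,\dots,s^{t+1})=F(F^t(c,s^1,\dots,s^t),s^{t+1})$, $F^0(c)=c$. Restriction: if $i:Q'\to Q$ is injective and $Y=i(Q')^{\mathbb{Z}}$ satisfies $F(Y,R^{\mathbb{Z}})\subseteq Y$, the $i$-restriction of $\mathcal{A}$ is the stochastic CA with states $Q'$, random symbols $R$ and explicit global function $F_i(c,s)=I^{-1}(F(I(c),s))$, $I$ the cellwise extension of $i$. Rescaling: for $m,t\ge1$, $k\in\mathbb{Z}$, the rescaling $\mathcal{A}^{\langle m,t,k\rangle}$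 has states $Q^m$, random symbols $(R^m)^t$, and explicit global function $F^{\langle m,t,k\rangle}(c,s)=b_m\circ\sigma_k\circ F^t(b_m^{-1}(c),b_m^{-1}(s^1),\dots,b_m^{-1}(s^t))$, where $s^i\in(R^m)^{\mathbb{Z}}$ with $s^i_j=(s_j)_i$, $\sigma_k(c)_z=c_{z+k}$, and $b_m(c)_z=(c_{mz},\dots,c_{mz+m-1})$. $\mathcal{A}_1\sqsubseteq^S_i\mathcal{A}_2$ means there exist $m_1,m_2,t_1,t_2,k_1,k_2$ and an $i$-restriction $\mathcal{C}$ of $\mathcal{A}_2^{\langle m_2,t_2,k_2\rangle}$ such that $\mathcal{A}_1^{\langle m_1,t_1,k_1\rangle}$ and $\mathcal{C}$ have the same stochastic global function. *)

(* Defs.v *)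
From mathcomp Require Import all_boot all_order all_algebra.
Set Implicit Arguments. Unset Strict Implicit. Unset Printing Implicit Defensive.
Import Order.TTheory GRing.Theory Num.Theory.
Local Open Scope ring_scope.

(** V = (v_1..v_r), V' = (v'_1..v'_{r'}) are listed as duplicate-free tuples
    (finite subsets of Z with a fixed enumeration, as in the paper). *)
Record sca (Q R : finType) := SCA {
  nb : nat;
  nbr : nat;
  nbhd : nb.-tuple int;
  rnbhd : nbr.-tuple int;
  nbhd_uniq : uniq nbhd;
  rnbhd_uniq : uniq rnbhd;
  lrule : nb.-tuple Q -> nbr.-tuple R -> Q
}.

Definition is_PCA (Q R : finType) (A : sca Q R) : Prop := val (rnbhd A) = [:: 0%Z].

Definition gfun (Q R : finType) (A : sca Q R) (c : int -> Q) (s : int -> R) : int -> Q :=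
  fun z => @lrule _ _ A [tuple c (z + tnth (nbhd A) j) | j < nb A]
                   [tuple s (z + tnth (rnbhd A) j) | j < nbr A].

Definition iterG (Q R : Type) (G : (int -> Q) -> (int -> R) -> (int -> Q))
  (c : int -> Q) (ss : seq (int -> R)) : int -> Q :=
  foldl (fun c' s => G c' s) c ss.

Definition shift (T : Type) (k : int) (c : int -> T) : int -> T := fun z => c (z + k).

Definition block (T : Type) (m : nat) (c : int -> T) : int -> m.-tuple T :=
  fun z => [tuple c (m%:Z * z + j%:Z) | j < m].

Lemma absz_mod_lt (m : nat) (hm : (0 < m)%N) (z : int) : (absz (z %% m%:Z)%Z < m)%N.
Proof.
have h0 : (0 <= (z %% m%:Z)%Z) by rewrite modz_ge0 // eqz_nat -lt0n.
have h1 : ((z %% m%:Z)%Z < m%:Z) by rewrite ltz_pmod // ltz_nat.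
by rewrite -ltz_nat gez0_abs.
Qed.

Definition unblock (T : Type) (m : nat) (hm : (0 < m)%N) (c : int -> m.-tuple T) : int -> T :=
  fun z => tnth (c (z %/ m%:Z)%Z) (Ordinal (absz_mod_lt hm z)).

(** explicit global function of the rescaling A^<m,t,k> (m = block size,
    t = number of time steps, k = shift), given the global function G of A *)
Definition rescale (Q R : Type) (G : (int -> Q) -> (int -> R) -> (int -> Q))
  (m : nat) (hm : (0 < m)%N) (t : nat) (k : int)
  (c : int -> m.-tuple Q) (s : int -> t.-tuple (m.-tuple R)) : int -> m.-tuple Q :=
  block m (shift k (iterG G (unblock hm c)
     [seq unblock hm (fun j => tnth (s j) i) | i <- enum 'I_t])).
Arguments rescale {Q R} G {m} hm t k c s.

Definition invariant (Q' Q R : Type) (i : Q' -> Q)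
  (G : (int -> Q) -> (int -> R) -> (int -> Q)) : Prop :=
  forall c s, (forall z, exists x, c z = i x) -> forall z, exists x, G c s z = i x.

(** i-restriction: F_i(c,s) = I^{-1}(F(I(c),s)) (the fallback branch is never
    used when Y is invariant and i is injective). *)
Definition restr (Q' : finType) (Q : eqType) (R : Type) (i : Q' -> Q)
  (G : (int -> Q) -> (int -> R) -> (int -> Q)) : (int -> Q') -> (int -> R) -> (int -> Q') :=
  fun c s z => match [pick x | i x == G (fun y => i (c y)) s z] with
               | Some x => x | None => c z end.

Definition cyl (Q : Type) (z : int) (u : seq Q) (x : int -> Q) : Prop :=
  [seq x (z + j%:Z) | j <- iota 0 (size u)] = u.

(** The uniform Bernoulli measure nu_R on events depending only on the
    window [a, a+n): nu_R(E) = #{w in R^n | [w]_a ⊆ E} / |R|^n. *)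
Definition agrees (R : Type) (n : nat) (a : int) (w : n.-tuple R) (s : int -> R) : Prop :=
  forall j : 'I_n, s (a + j%:Z) = tnth w j.

Definition determined (R : Type) (E : (int -> R) -> Prop) (a : int) (n : nat) : Prop :=
  forall s1 s2 : int -> R, (forall j : 'I_n, s1 (a + j%:Z) = s2 (a + j%:Z)) -> (E s1 <-> E s2).

Definition has_prob (R : finType) (E : (int -> R) -> Prop) (p : rat) : Prop :=
  exists (a : int) (n : nat) (S : {set n.-tuple R}),
    determined E a n /\
    (forall w, w \in S <-> (forall s, agrees a w s -> E s)) /\
    p = (#|S|%:R / (#|R| ^ n)%:R)%R.

(** same stochastic global function: for every c, the laws of G1(c,.) under
    nu_R1 and G2(c,.) under nu_R2 agree on every cylinder (hence are equal) *)
Definition same_sgf (Q : Type) (R1 R2 : finType)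
  (G1 : (int -> Q) -> (int -> R1) -> (int -> Q))
  (G2 : (int -> Q) -> (int -> R2) -> (int -> Q)) : Prop :=
  forall (c : int -> Q) (z : int) (u : seq Q), exists p : rat,
    has_prob (fun s => cyl z u (G1 c s)) p /\ has_prob (fun s => cyl z u (G2 c s)) p.

Definition simulated_by (QA RA QB RB : finType) (A : sca QA RA) (B : sca QB RB) : Prop :=
  exists (m1 : nat) (h1 : (0 < m1)%N) (m2 : nat) (h2 : (0 < m2)%N)
         (t1 t2 : nat) (k1 k2 : int),
    (0 < t1)%N /\ (0 < t2)%N /\
    exists i : m1.-tuple QA -> m2.-tuple QB,
      injective i /\
      invariant i (rescale (gfun B) h2 t2 k2) /\
      same_sgf (rescale (gfun A) h1 t1 k1) (restr i (rescale (gfun B) h2 t2 k2)).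

(* Main.v *)
Require Import Defs.
From mathcomp Require Import all_boot all_order all_algebra zify.
From Stdlib Require Import FunctionalExtensionality ClassicalEpsilon.
Set Implicit Arguments. Unset Strict Implicit. Unset Printing Implicit Defensive.
Import Order.TTheory GRing.Theory Num.Theory.
Local Open Scope ring_scope.

Section B.
Variables (Q R : finType) (A : sca Q R).

Definition restN : seq int :=
  undup (filter (fun v => v != 0%Z) (val (nbhd A) ++ val (rnbhd A))).
Definition nbB : (size restN).+1.-tuple int := cons_tuple 0%Z (in_tuple restN).
Definition rnbB : 1.-tuple int := [tuple 0%Z].

Lemma nbB_uniq : uniq nbB.
Proof.
rewrite /= undup_uniq andbT mem_undup mem_filter; by rewrite eqxx.
Qed.
Lemma rnbB_uniq : uniq rnbB. Proof. by []. Qed.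

Definition QB := (Q * option R)%type.

Definition lruleB (x : (size restN).+1.-tuple QB) (r : 1.-tuple R) : QB :=
  let own := tnth x ord0 in
  let lk v := nth own x (index v nbB) in
  match own.2 with
  | None => (own.1, Some (tnth r ord0))
  | Some _ => (@lrule _ _ A [tuple (lk (tnth (nbhd A) j)).1 | j < nb A]
                       [tuple odflt (tnth r ord0) (lk (tnth (rnbhd A) j)).2 | j < nbr A], None)
  end.

Definition Bca : sca QB R := @SCA QB R _ _ nbB rnbB nbB_uniq rnbB_uniq lruleB.

Lemma isPCA_B : is_PCA Bca. Proof. by []. Qed.

Lemma mem_nbB v : v \in val (nbhd A) ++ val (rnbhd A) -> v \in val nbB.
Proof.
move=> h; rewrite /= in_cons mem_undup mem_filter h andbT.
by case: (v == 0%Z).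
Qed.

Lemma lk_eq (c : int -> QB) z v d : v \in val nbB ->
  nth d [tuple c (z + tnth nbB j) | j < (size restN).+1] (index v nbB) = c (z + v).
Proof.
move=> hv.
have -> : [tuple c (z + tnth nbB j) | j < (size restN).+1] = map_tuple (fun w => c (z + w)) nbB.
  by apply: eq_from_tnth => j; rewrite !tnth_map tnth_ord_tuple.
rewrite (_ : tval (map_tuple _ _) = map (fun w => c (z + w)) nbB) //.
by rewrite (nth_map 0%Z) ?nth_index // index_mem.
Qed.

Lemma gfunB1 c s z : (c z).2 = None -> gfun Bca c s z = ((c z).1, Some (s z)).
Proof.
rewrite /gfun /= /lruleB !tnth_map !tnth_ord_tuple /= !addr0 => ->.
by [].
Qed.

Lemma gfunB2 c s z (q : int -> Q) (r : int -> R) :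
  (forall y, c y = (q y, Some (r y))) ->
  gfun Bca c s z = (@lrule _ _ A [tuple q (z + tnth (nbhd A) j) | j < nb A]
                            [tuple r (z + tnth (rnbhd A) j) | j < nbr A], None).
Proof.
move=> hc; rewrite /gfun /= /lruleB !tnth_map !tnth_ord_tuple /= addr0 hc /=.
congr (_, _); congr (@lrule _ _ A _ _); apply: eq_from_tnth => j; rewrite !tnth_map !tnth_ord_tuple.
  rewrite (@lk_eq c z (tnth (nbhd A) j)) ?hc //; apply: mem_nbB.
  by rewrite mem_cat mem_tnth.
rewrite (@lk_eq c z (tnth (rnbhd A) j)) ?hc //; apply: mem_nbB.
by rewrite mem_cat mem_tnth orbT.
Qed.
End B.

Lemma unblock1 (T : Type) (h : (0 < 1)%N) (c : int -> 1.-tuple T) z :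
  unblock h c z = tnth (c z) ord0.
Proof. by rewrite /unblock divz1; congr tnth; apply: val_inj => /=; rewrite modz1. Qed.

Lemma rescale1 (Q R : Type) (G : (int -> Q) -> (int -> R) -> (int -> Q)) (h : (0 < 1)%N) t c s z :
  rescale G h t 0 c s z =
  [tuple iterG G (fun y => tnth (c y) ord0)
      [seq (fun y => tnth (tnth (s y) i) ord0) | i <- enum 'I_t] z].
Proof.
rewrite /rescale /block; apply: eq_from_tnth => j.
rewrite !tnth_map !tnth_ord_tuple /= (ord1 j) /= mul1r addr0 /shift addr0.
have -> : unblock h c = (fun y => tnth (c y) ord0) by apply: functional_extensionality => y; rewrite unblock1.
congr (iterG _ _ _ _); apply: eq_map => i; apply: functional_extensionality => y.
by rewrite unblock1.
Qed.

Arguments gfun : simpl never.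
Section M.
Variables (Q R : finType) (A : sca Q R).
Definition iB (x : 1.-tuple Q) : 1.-tuple (QB Q R) := [tuple (tnth x ord0, None)].

Lemma iB_inj : injective iB.
Proof.
move=> x y /(congr1 (fun t => (tnth t ord0).1)) /= h.
by apply: eq_from_tnth => j; rewrite (ord1 j).
Qed.

Definition phi1 (w : 2.-tuple (1.-tuple R)) : 1.-tuple (1.-tuple R) := [tuple tnth w ord0].

Lemma stepB (h : (0 < 1)%N) c s z :
  rescale (gfun (Bca A)) h 2 0 (fun y => iB (c y)) s z =
  iB (rescale (gfun A) h 1 0 c (fun y => phi1 (s y)) z).
Proof.
rewrite !rescale1 enum_ordSl enum_ordSl enum_ord0 /= /iterG /=.
set s1 := fun y => tnth (tnth (s y) ord0) ord0.
rewrite (@gfunB2 _ _ A _ _ z (fun y => tnth (c y) ord0) s1); last first.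
  by move=> y; rewrite gfunB1.
rewrite /iB; apply: eq_from_tnth => j; rewrite (ord1 j) /= /gfun.
by [].
Qed.

Lemma restrB (h : (0 < 1)%N) c s :
  restr iB (rescale (gfun (Bca A)) h 2 0) c s =
  rescale (gfun A) h 1 0 c (fun y => phi1 (s y)).
Proof.
apply: functional_extensionality => z; rewrite /restr.
case: pickP => [x /eqP hx | /(_ (rescale (gfun A) h 1 0 c (fun y => phi1 (s y)) z))].
  by apply: iB_inj; rewrite hx stepB.
by rewrite stepB eqxx.
Qed.

Lemma invB (h : (0 < 1)%N) : Defs.invariant iB (rescale (gfun (Bca A)) h 2 0).
Proof.
move=> c s hc z.
pose c' y := [tuple (tnth (c y) ord0).1].
have -> : c = fun y => iB (c' y).
  apply: functional_extensionality => y; case: (hc y) => x hx.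
  by rewrite /c' hx /iB; apply: eq_from_tnth => j; rewrite (ord1 j).
by rewrite stepB; eexists.
Qed.
End M.

Definition dec (P : Prop) : bool := if excluded_middle_informative P then true else false.
Lemma decP (P : Prop) : dec P <-> P.
Proof. by rewrite /dec; case: excluded_middle_informative. Qed.

Definition ext (R : Type) (r0 : R) (a : int) (n : nat) (w : n.-tuple R) : int -> R :=
  fun z => if (0 <= z - a) then nth r0 w (absz (z - a)) else r0.

Lemma ext_agrees (R : Type) r0 a n (w : n.-tuple R) : agrees a w (ext r0 a w).
Proof.
move=> j; rewrite /ext (_ : a + j%:Z - a = j%:Z); last by lia.
by rewrite lez_nat /= (tnth_nth r0).
Qed.

Lemma hp_exists (R : finType) (r0 : R) (E : (int -> R) -> Prop) a n :
  determined E a n -> exists p, has_prob E p.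
Proof.
move=> hd; exists ((#|[set w : n.-tuple R | dec (E (ext r0 a w))]|%:R / (#|R| ^ n)%:R)%R).
exists a, n, [set w : n.-tuple R | dec (E (ext r0 a w))]; split => //; split => // w.
rewrite inE decP; split.
  move=> hE s hs; apply/(hd (ext r0 a w)) => // j.
  by rewrite ext_agrees hs.
by move=> h; apply: h; apply: ext_agrees.
Qed.

Lemma hp_prod (R2 R1 K : finType) (f1 : R2 -> R1) (f2 : R2 -> K) (psi : R1 -> K -> R2)
  (x0 : R2)
  (h1 : forall x, psi (f1 x) (f2 x) = x) (h2 : forall a b, f1 (psi a b) = a)
  (h3 : forall a b, f2 (psi a b) = b) (E : (int -> R1) -> Prop) p :
  has_prob E p -> has_prob (fun s : int -> R2 => E (fun z => f1 (s z))) p.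
Proof.
case=> a [n [S [hd [hS ->]]]].
pose S2 := [set w : n.-tuple R2 | map_tuple f1 w \in S].
exists a, n, S2; split; [|split].
- by move=> s1 s2 hs; apply: hd => j; rewrite hs.
- move=> w; rewrite inE hS; split.
    move=> h s hs; apply: h => j; by rewrite tnth_map hs.
  move=> h s1 hs1.
  pose s z := psi (s1 z) (f2 (ext x0 a w z)).
  have -> : s1 = fun z => f1 (s z).
    by apply: functional_extensionality => z; rewrite /s h2.
  apply: h => j; rewrite /s ext_agrees hs1 tnth_map h1 //.
- pose g (w : n.-tuple R2) := (map_tuple f1 w, map_tuple f2 w).
  have ginj : injective g.
    move=> w w' e; apply: eq_from_tnth => j.
    have := congr1 (fun t => tnth t.1 j) e; have := congr1 (fun t => tnth t.2 j) e.
    rewrite /g /= !tnth_map => e2' e1'.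
    by rewrite -[tnth w j]h1 e1' e2' h1.
  have cS2 : #|S2| = (#|S| * #|K| ^ n)%N.
    rewrite -(card_imset (mem S2) ginj) -card_tuple -cardsT -cardsX; congr (#|pred_of_set _|).
    apply/setP => -[w1 w2]; rewrite !inE /=; apply/imsetP/idP.
      case=> w hw e; have -> : w1 = (g w).1 by rewrite -e. rewrite /= andbT; by rewrite inE in hw.
    move=> hw1; exists [tuple psi (tnth w1 j) (tnth w2 j) | j < n].
      rewrite inE; suff -> : map_tuple f1 [tuple psi (tnth w1 j) (tnth w2 j) | j < n] = w1 by move: hw1; rewrite andbT.
      by apply: eq_from_tnth => j; rewrite !tnth_map tnth_ord_tuple h2.
    by congr (_, _); apply: eq_from_tnth => j; rewrite !tnth_map tnth_ord_tuple ?h2 ?h3.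
  have cR2 : #|R2| = (#|R1| * #|K|)%N.
    rewrite -card_prod; apply: (@bij_eq_card _ _ (fun x => (f1 x, f2 x))).
    exists (fun q => psi q.1 q.2) => [x|[q1 q2]] /=; by rewrite ?h1 ?h2 ?h3.
  have K0 : (0 < #|K|)%N by apply/card_gt0P; exists (f2 x0).
  rewrite cS2 cR2 expnMn !natrM invfM mulrACA mulfV ?mulr1 //.
  by rewrite pnatr_eq0 -lt0n expn_gt0 K0.
Qed.

Definition maxV (Q R : finType) (A : sca Q R) : nat := (\max_(k < nbr A) absz (tnth (rnbhd A) k))%N.

Lemma detA (Q R : finType) (A : sca Q R) (h : (0 < 1)%N) c z (u : seq (1.-tuple Q)) :
  determined (fun s => cyl z u (rescale (gfun A) h 1 0 c s)) (z - (maxV A)%:Z) (size u + 2 * maxV A)%N.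
Proof.
set M := maxV A; move=> s1 s2 hs.
suff e : forall j, (j < size u)%N ->
  rescale (gfun A) h 1 0 c s1 (z + j%:Z) = rescale (gfun A) h 1 0 c s2 (z + j%:Z).
  rewrite /cyl.
  have -> : [seq rescale (gfun A) h 1 0 c s1 (z + j%:Z) | j <- iota 0 (size u)] =
            [seq rescale (gfun A) h 1 0 c s2 (z + j%:Z) | j <- iota 0 (size u)].
    by apply/eq_in_map => j; rewrite mem_iota add0n => /e.
  by [].
move=> j hj; rewrite !rescale1 enum_ordSl enum_ord0 /= /iterG /=.
congr [tuple _]; rewrite /gfun; congr (@lrule _ _ A _ _).
apply: eq_from_tnth => k; rewrite !tnth_map !tnth_ord_tuple.
set v := tnth (rnbhd A) k.
have hv : (absz v <= M)%N by rewrite /M /v /maxV; exact: (@leq_bigmax _ (fun k => absz (tnth (rnbhd A) k)) k).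
set p := z + j%:Z + v.
have hlt : (absz (p - (z - M%:Z))%R < size u + 2 * M)%N by rewrite /p; lia.
have := hs (Ordinal hlt); rewrite /= (_ : z - M%:Z + (absz (p - (z - M%:Z))%R)%:Z = p); last by rewrite /p; lia.
by move=> ->.
Qed.

Theorem theorem3 (Q R : finType) (HR : (0 < #|R|)%N) (A : sca Q R) :
  exists (QB RB : finType), (0 < #|RB|)%N /\
    exists B : sca QB RB, is_PCA B /\ simulated_by A B.
Proof.
have [r0 _] := card_gt0P HR.
exists (QB Q R), R; split => //; exists (Bca A); split; first exact: isPCA_B.
exists 1%N, (ltn0Sn 0), 1%N, (ltn0Sn 0), 1%N, 2%N, 0, 0; split => //; split => //.
exists (@iB Q R); split; first exact: iB_inj.
split; first exact: invB.
move=> c z u.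
have [p hp] := hp_exists [tuple [tuple r0]] (@detA _ _ A (ltn0Sn 0) c z u).
exists p; split => //.
suff -> : (fun s => cyl z u (restr (@iB Q R) (rescale (gfun (Bca A)) (ltn0Sn 0) 2 0) c s)) =
          (fun s => cyl z u (rescale (gfun A) (ltn0Sn 0) 1 0 c (fun y => phi1 (s y)))).
  pose psi (a : 1.-tuple (1.-tuple R)) (b : 1.-tuple R) : 2.-tuple (1.-tuple R) := [tuple tnth a ord0; b].
  pose f2 (w : 2.-tuple (1.-tuple R)) := tnth w ord_max.
  have h1 : forall x, psi (phi1 x) (f2 x) = x.
    move=> x; apply: eq_from_tnth => -[[|[|//]]] ? /=.
      by rewrite /psi /phi1 /f2 !(tnth_nth [tuple r0]) /=.
    by rewrite /psi /phi1 /f2 !(tnth_nth [tuple r0]) /=.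
  have h2 : forall a b, phi1 (psi a b) = a.
    by move=> a b; apply: eq_from_tnth => j; rewrite (ord1 j).
  have h3 : forall a b, f2 (psi a b) = b by [].
  exact: (hp_prod [tuple [tuple r0]; [tuple r0]] h1 h2 h3 hp).
by apply: functional_extensionality => s; rewrite restrB.
Qed.
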